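(* Let $\mathcal{H}$ be a Hilbert space with a unit vector $\xi$ and expectation functional $\phi(T)=\langle T\xi,\xi\rangle$. Let $P,Q$ be Boolean independent orthogonal projections on $(\mathcal{H},\xi)$ with $\phi(P)=1-p$ and $\phi(Q)=1-q$, where $p,q\in[0,1]$. Then $\phi(P\vee Q)=1-r$, where $r\in[0,1]$ is determined by $$r^{-1}-1=(p^{-1}-1)+(q^{-1}-1).$$
   Context: Noncommutative random variables are self-adjoint operators on $\mathcal{H}$, with distribution taken with respect to $\phi$. Two families of bounded self-adjoint operators are Boolean independent with respect to $\phi$ if, denoting by $\mathcal{A}$ and $\mathcal{B}$ the (non-unital) $*$-algebras they generate, one has $\phi(c_1c_2\cdots c_n)=\phi(c_1)\phi(c_2)\cdots\phi(c_n)$ whenever each $c_i$ lies in $\mathcal{A}$ or in $\mathcal{B}$ and consecutive $c_i$ alternate between $\mathcal{A}$ and $\mathcal{B}$. For projections $P,Q$, $P\vee Q$ denotes the spectral (Ando) max, i.e. the projection $I-\big((I-P)\wedge(I-Q)\big)$, where $\wedge$ is the orthogonal projection onto the intersection of ranges; equivalently the orthogonal projection onto the closed span of the ranges of $P$ and $Q$. Convention: $0^{-1}=+\infty$ and $(+\infty)^{-1}=0$. *)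

(* Defs.v *)
From HB Require Import structures.
From mathcomp Require Import all_boot all_order all_algebra.
From mathcomp Require Import complex.
From mathcomp Require Import reals constructive_ereal.
Set Implicit Arguments. Unset Strict Implicit. Unset Printing Implicit Defensive.
Import Order.TTheory GRing.Theory Num.Theory.
Local Open Scope ring_scope.

Section Hilbert.
Variable R : realType.
Local Notation C := (complex R).
Variable H : lmodType C.
Variable ip : H -> H -> C.

Definition hnorm (x : H) : R := Num.sqrt (complex.Re (ip x x)).

Definition is_hilbert : Prop :=
  [/\ (forall (a : C) (x y z : H), ip (a *: x + y) z = a * ip x z + ip y z),
      (forall x y : H, ip y x = (ip x y)^*),
      (forall x : H, 0 <= ip x x),
      (forall x : H, ip x x = 0 -> x = 0) &
      (forall u : nat -> H,
         (forall e : R, 0 < e -> exists N, forall m n, (N <= m)%N -> (N <= n)%N ->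
              hnorm (u m - u n) < e) ->
         exists l : H, forall e : R, 0 < e -> exists N, forall n, (N <= n)%N ->
              hnorm (u n - l) < e)].

Definition bounded_op (T : H -> H) : Prop :=
  (forall (a : C) (x y : H), T (a *: x + y) = a *: T x + T y) /\
  exists M : R, forall x, hnorm (T x) <= M * hnorm x.

Definition is_adjoint (T S : H -> H) : Prop :=
  forall x y : H, ip (T x) y = ip x (S y).

Definition self_adjoint (T : H -> H) : Prop := is_adjoint T T.

Definition is_proj (P : H -> H) : Prop :=
  [/\ bounded_op P, self_adjoint P & forall x, P (P x) = P x].

(* non-unital *-algebra generated by a family G of operators *)
Inductive gen_alg (G : (H -> H) -> Prop) : (H -> H) -> Prop :=
  | ga_gen T : G T -> gen_alg G T
  | ga_add S T : gen_alg G S -> gen_alg G T -> gen_alg G (fun x => S x + T x)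
  | ga_scale (a : C) T : gen_alg G T -> gen_alg G (fun x => a *: T x)
  | ga_comp S T : gen_alg G S -> gen_alg G T -> gen_alg G (S \o T)
  | ga_adj T S : gen_alg G T -> is_adjoint T S -> gen_alg G S.

Definition phi (xi : H) (T : H -> H) : C := ip (T xi) xi.

(* product c_1 c_2 ... c_n of a word (composition, c_1 outermost) *)
Definition word_op (s : seq (bool * (H -> H))) : H -> H :=
  foldr (fun c acc => c.2 \o acc) id s.

(* Boolean independence of the families GA, GB w.r.t. phi_xi:
   words alternating between the generated algebras A (label true)
   and B (label false) factorize. *)
Definition boolean_indep (xi : H) (GA GB : (H -> H) -> Prop) : Prop :=
  forall s : seq (bool * (H -> H)),
    (forall i, (i < size s)%N ->
        gen_alg (if (nth (true, id) s i).1 then GA else GB) (nth (true, id) s i).2) ->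
    (forall i, (i.+1 < size s)%N ->
        (nth (true, id) s i).1 != (nth (true, id) s i.+1).1) ->
    phi xi (word_op s) = \prod_(c <- s) phi xi c.2.

Definition in_closure (S : H -> Prop) (x : H) : Prop :=
  forall e : R, 0 < e -> exists y, S y /\ hnorm (x - y) < e.

(* P \/ Q : the orthogonal projection onto the closed span of ran P and ran Q
   (the span of two subspaces being their sum) *)
Definition is_proj_join (P Q J : H -> H) : Prop :=
  is_proj J /\
  forall x, (exists y, x = J y) <->
            in_closure (fun z => exists a b, z = P a + Q b) x.

End Hilbert.

Definition inv_ext (R : realType) (x : R) : \bar R :=
  if x == 0 then +oo%E else (x^-1)%:E.

(* Main.v *)
Require Import Defs.
From HB Require Import structures.
From mathcomp Require Import all_boot all_order all_algebra.
From mathcomp Require Import complex.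
From mathcomp Require Import reals constructive_ereal.
From mathcomp Require Import ring lra.
Import Order.TTheory GRing.Theory Num.Theory.
Local Open Scope ring_scope.

Lemma cr (R : realType) (x : R) : ((x%:C)%C)^* = (x%:C)%C :> complex R.
Proof. exact: (@conjc_real R x). Qed.


Lemma ip_props (R : realType) (H : lmodType (complex R))
  (ip : H -> H -> complex R) (hH : is_hilbert ip) :
  [/\ (forall z, ip 0 z = 0), (forall z, ip z 0 = 0),
      (forall x y z, ip (x + y) z = ip x z + ip y z),
      (forall c x z, ip (c *: x) z = c * ip x z) &
      (forall x y z, ip (x - y) z = ip x z - ip y z)] /\
  [/\ (forall x y z, ip z (x + y) = ip z x + ip z y),
      (forall c x z, ip z (c *: x) = c^* * ip z x) &
      (forall x y z, ip z (x - y) = ip z x - ip z y)].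
Proof.
case: hH => ipl ipc _ _ _.
have ip0l : forall z, ip 0 z = 0.
  move=> z; have := ipl 1 0 0 z; rewrite scale1r addr0 mul1r => h.
  by apply/(addrI (ip 0 z)); rewrite addr0 -h.
have ipD : forall x y z, ip (x + y) z = ip x z + ip y z.
  by move=> x y z; have := ipl 1 x y z; rewrite scale1r mul1r.
have ipZ : forall c x z, ip (c *: x) z = c * ip x z.
  by move=> c x z; have := ipl c x 0 z; rewrite !addr0 ip0l addr0.
have ipB : forall x y z, ip (x - y) z = ip x z - ip y z.
  by move=> x y z; rewrite ipD -scaleN1r ipZ mulN1r.
have ipr0 : forall z, ip z 0 = 0 by move=> z; rewrite ipc ip0l rmorph0.
have ipDr : forall x y z, ip z (x + y) = ip z x + ip z y.
  by move=> x y z; rewrite ipc ipD rmorphD /= -!ipc.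
have ipZr : forall c x z, ip z (c *: x) = c^* * ip z x.
  by move=> c x z; rewrite ipc ipZ rmorphM /= -!ipc.
split; split => //.
by move=> x y z; rewrite ipDr -scaleN1r ipZr rmorphN rmorph1 mulN1r.
Qed.

Lemma lin_props (R : realType) (H : lmodType (complex R)) (T : H -> H)
  (hT : forall (a : complex R) (x y : H), T (a *: x + y) = a *: T x + T y) :
  [/\ T 0 = 0, (forall x y, T (x + y) = T x + T y),
      (forall c x, T (c *: x) = c *: T x) & (forall x y, T (x - y) = T x - T y)].
Proof.
have T0 : T 0 = 0.
  have := hT 1 0 0; rewrite !scale1r !addr0 => h.
  by apply/(addrI (T 0)); rewrite addr0 -h.
have TD : forall x y, T (x + y) = T x + T y.
  by move=> x y; have := hT 1 x y; rewrite !scale1r.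
have TZ : forall c x, T (c *: x) = c *: T x.
  by move=> c x; have := hT c x 0; rewrite !addr0 T0 addr0.
split => // x y; by rewrite TD -scaleN1r TZ scaleN1r.
Qed.

Lemma hnorm0 (R : realType) (H : lmodType (complex R))
  (ip : H -> H -> complex R) (hH : is_hilbert ip) : hnorm ip 0 = 0.
Proof.
case: (ip_props _ _ _ hH) => [[ip0l _ _ _ _] _].
by rewrite /hnorm ip0l /= sqrtr0.
Qed.

Lemma absorb (R : realType) (H : lmodType (complex R))
  (ip : H -> H -> complex R) (hH : is_hilbert ip) (xi : H) (P Q : H -> H)
  (hP : is_proj ip P) (hQ : is_proj ip Q) (a b : R)
  (fP : ip (P xi) xi = (a%:C)%C) (fPQ : ip (P (Q xi)) xi = (a%:C)%C * (b%:C)%C)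
  (fQP : ip (Q (P xi)) xi = (b%:C)%C * (a%:C)%C)
  (fQPQ : ip (Q (P (Q xi))) xi = (b%:C)%C * ((a%:C)%C * (b%:C)%C)) :
  P (Q xi) = (b%:C)%C *: P xi.
Proof.
have [[ip0l ipr0 ipD ipZ ipB] [ipDr ipZr ipBr]] := ip_props _ _ _ hH.
case: hH => ipl ipc ipge ip0 _.
case: hP => [_ Psa PP]; case: hQ => [_ Qsa _].
have Psa' : forall x y, ip (P x) y = ip x (P y) := Psa.
have Qsa' : forall x y, ip (Q x) y = ip x (Q y) := Qsa.
apply/eqP; rewrite -subr_eq0; apply/eqP/ip0.
have uu : ip (P (Q xi)) (P (Q xi)) = (b%:C)%C * ((a%:C)%C * (b%:C)%C).
  by rewrite Psa' PP Qsa' ipc fQPQ !rmorphM /= !cr.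
have uv : ip (P (Q xi)) (P xi) = (b%:C)%C * (a%:C)%C.
  by rewrite Psa' PP Qsa' ipc fQP !rmorphM /= !cr.
have vu : ip (P xi) (P (Q xi)) = (a%:C)%C * (b%:C)%C.
  by rewrite Psa' PP ipc fPQ !rmorphM /= !cr.
have vv : ip (P xi) (P xi) = (a%:C)%C.
  by rewrite Psa' PP ipc fP !cr.
rewrite !ipB !ipBr !ipZ !ipZr uu uv vu vv cr.
ring.
Qed.

Lemma keyJ (R : realType) (H : lmodType (complex R))
  (ip : H -> H -> complex R) (hH : is_hilbert ip) (xi : H) (P Q : H -> H)
  (hP : is_proj ip P) (hQ : is_proj ip Q) (a b al be : R)
  (fP : ip (P xi) xi = (a%:C)%C) (fQ : ip (Q xi) xi = (b%:C)%C)
  (hPQ : P (Q xi) = (b%:C)%C *: P xi) (hQP : Q (P xi) = (a%:C)%C *: Q xi)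
  (e1 : al + be * b = 1) (e2 : be + al * a = 1) (J : H -> H)
  (hJ : is_proj_join ip P Q J) :
  phi ip xi J = (al * a + be * b)%:C%C.
Proof.
have [[ip0l ipr0 ipD ipZ ipB] [ipDr ipZr ipBr]] := ip_props _ _ _ hH.
have hn0 := hnorm0 _ _ _ hH.
case: hH => ipl ipc ipge ip0 _.
case: hP => [[Pl _] Psa PP]; case: hQ => [[Ql _] Qsa QQ].
have Psa' : forall x y, ip (P x) y = ip x (P y) := Psa.
have Qsa' : forall x y, ip (Q x) y = ip x (Q y) := Qsa.
have [P0 PD PZ PB] := lin_props _ _ _ Pl.
have [Q0 QD QZ QB] := lin_props _ _ _ Ql.
case: hJ => [[[Jl _] Jsa JJ] Jr].
have Jsa' : forall x y, ip (J x) y = ip x (J y) := Jsa.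
have [J0 JD JZ JB] := lin_props _ _ _ Jl.
set y := (al%:C)%C *: P xi + (be%:C)%C *: Q xi.
set w := xi - y.
have e1C : (al%:C)%C + (be%:C)%C * (b%:C)%C = 1 :> complex R.
  by rewrite -rmorphM -rmorphD e1.
have e2C : (al%:C)%C * (a%:C)%C + (be%:C)%C = 1 :> complex R.
  by rewrite -rmorphM -rmorphD addrC e2.
have Pw : P w = 0.
  by rewrite /w /y PB PD !PZ PP hPQ scalerA -scalerDl e1C scale1r subrr.
have Qw : Q w = 0.
  by rewrite /w /y QB QD !QZ QQ hQP scalerA -scalerDl e2C scale1r subrr.
have inJ : forall z, (exists a0 b0, z = P a0 + Q b0) -> J z = z.
  move=> z hz.
  have [z0 ->] : exists z0, z = J z0.
    by apply/Jr => e he; exists z; split => //; rewrite subrr hn0.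
  by rewrite JJ.
have Jy : J y = y.
  apply: inJ; exists ((al%:C)%C *: xi), ((be%:C)%C *: xi).
  by rewrite !PZ !QZ.
have v0 : J w = 0.
  have vin : in_closure ip (fun z => exists a0 b0, z = P a0 + Q b0) (J w).
    by apply/Jr; exists w.
  have orth : forall z, (exists a0 b0, z = P a0 + Q b0) -> ip (J w) z = 0.
    move=> z hz; rewrite Jsa' inJ //.
    case: hz => a0 [b0 ->].
    by rewrite ipDr ipc Psa' Pw ipr0 [ip w (Q b0)]ipc Qsa' Qw ipr0 rmorph0 addr0.
  set v := J w in vin orth *.
  apply: ip0.
  have := ipge v; rewrite lecE /= => /andP [/eqP hIm hRe].
  have vvE : ip v v = ((complex.Re (ip v v))%:C)%C.
    by case: (ip v v) hIm => r i /= ->.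
  suff : complex.Re (ip v v) = 0 by rewrite vvE => ->.
  apply/eqP; rewrite eq_le hRe andbT; apply/negP => /negP; rewrite -ltNge => tpos.
  set t := complex.Re (ip v v) in tpos vvE *.
  have st : 0 < Num.sqrt t by rewrite sqrtr_gt0.
  have [z [hz hd]] := vin _ st.
  rewrite /hnorm ltr_sqrt // in hd.
  have hvz : ip v z = 0 := orth z hz.
  have := ipge z; rewrite lecE /= => /andP [_ hz0].
  have : complex.Re (ip (v - z) (v - z)) = t + complex.Re (ip z z).
    rewrite ipB !ipBr hvz [ip z v]ipc hvz rmorph0 !subr0 sub0r opprK vvE.
    by case: (ip z z).
  move=> E; rewrite E gtrDl in hd.
  by move: hz0; rewrite leNgt hd.
by rewrite /phi -{1}[xi](subrK y) addrC JD Jy v0 addr0 /y ipD !ipZ fP fQ rmorphD !rmorphM.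
Qed.

Theorem lemma3p1 (R : realType) (H : lmodType (complex R))
  (ip : H -> H -> complex R) (hH : is_hilbert ip)
  (xi : H) (hxi : hnorm ip xi = 1)
  (P Q : H -> H) (hP : is_proj ip P) (hQ : is_proj ip Q)
  (hind : boolean_indep ip xi (fun T => T = P) (fun T => T = Q))
  (p q : R) (hp : 0 <= p <= 1) (hq : 0 <= q <= 1)
  (hphiP : phi ip xi P = (1 - p)%:C%C) (hphiQ : phi ip xi Q = (1 - q)%:C%C) :
  exists r : R, [/\ 0 <= r <= 1,
    (inv_ext r - 1%:E = (inv_ext p - 1%:E) + (inv_ext q - 1%:E))%E &
    forall J : H -> H, is_proj_join ip P Q J -> phi ip xi J = (1 - r)%:C%C].
Proof.
have fP : ip (P xi) xi = ((1 - p)%:C)%C := hphiP.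
have fQ : ip (Q xi) xi = ((1 - q)%:C)%C := hphiQ.
have fPQ : ip (P (Q xi)) xi = ((1 - p)%:C)%C * ((1 - q)%:C)%C.
  move: (hind [:: (true, P); (false, Q)]) => h.
  rewrite !big_cons big_nil mulr1 hphiP hphiQ in h; apply: h.
  - by move=> [|[|i]] //= _; apply: ga_gen.
  - by move=> [|[|i]].
have fQP : ip (Q (P xi)) xi = ((1 - q)%:C)%C * ((1 - p)%:C)%C.
  move: (hind [:: (false, Q); (true, P)]) => h.
  rewrite !big_cons big_nil mulr1 hphiP hphiQ in h; apply: h.
  - by move=> [|[|i]] //= _; apply: ga_gen.
  - by move=> [|[|i]].
have fQPQ : ip (Q (P (Q xi))) xi
    = ((1 - q)%:C)%C * (((1 - p)%:C)%C * ((1 - q)%:C)%C).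
  move: (hind [:: (false, Q); (true, P); (false, Q)]) => h.
  rewrite !big_cons big_nil mulr1 hphiP hphiQ in h; apply: h.
  - by move=> [|[|[|i]]] //= _; apply: ga_gen.
  - by move=> [|[|[|i]]].
have fPQP : ip (P (Q (P xi))) xi
    = ((1 - p)%:C)%C * (((1 - q)%:C)%C * ((1 - p)%:C)%C).
  move: (hind [:: (true, P); (false, Q); (true, P)]) => h.
  rewrite !big_cons big_nil mulr1 hphiP hphiQ in h; apply: h.
  - by move=> [|[|[|i]]] //= _; apply: ga_gen.
  - by move=> [|[|[|i]]].
have hPQ := absorb _ _ _ hH xi P Q hP hQ (1 - p) (1 - q) fP fPQ fQP fQPQ.
have hQP := absorb _ _ _ hH xi Q P hQ hP (1 - q) (1 - p) fQ fQP fPQ fPQP.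
have key := keyJ _ _ _ hH xi P Q hP hQ (1 - p) (1 - q) _ _ fP fQ hPQ hQP.
case/andP: hp => p0 p1; case/andP: hq => q0 q1.
have [pe|pnz] := eqVneq p 0.
  exists 0; split; first by rewrite lexx ler01.
  - by rewrite /inv_ext eqxx pe eqxx; case: ifP.
  - move=> J hJ.
    have e1 : 1 + 0 * (1 - q) = 1 :> R by ring.
    have e2 : 0 + 1 * (1 - p) = 1 :> R by rewrite pe; ring.
    by rewrite (key 1 0 e1 e2 J hJ) pe; apply: congr1; ring.
have [qe|qnz] := eqVneq q 0.
  exists 0; split; first by rewrite lexx ler01.
  - by rewrite /inv_ext eqxx qe eqxx (negbTE pnz) /=.
  - move=> J hJ.
    have e1 : 0 + 1 * (1 - q) = 1 :> R by rewrite qe; ring.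
    have e2 : 1 + 0 * (1 - p) = 1 :> R by ring.
    by rewrite (key 0 1 e1 e2 J hJ) qe; apply: congr1; ring.
have pp : 0 < p by rewrite lt0r pnz.
have qp : 0 < q by rewrite lt0r qnz.
have dp : 0 < p + q - p * q by nra.
have dnz : p + q - p * q != 0 by rewrite gt_eqF.
exists (p * q / (p + q - p * q)); split.
- apply/andP; split; first by apply: divr_ge0; [apply: mulr_ge0|apply: ltW].
  by rewrite ler_pdivrMr // mul1r; nra.
- have rnz : p * q / (p + q - p * q) != 0.
    by rewrite mulf_neq0 ?invr_eq0 ?mulf_neq0.
  rewrite /inv_ext (negbTE rnz) (negbTE pnz) (negbTE qnz) -!EFinB -EFinD.
  by apply: congr1; field; rewrite pnz qnz dnz.
- move=> J hJ.
  have e1 : q / (p + q - p * q) + p / (p + q - p * q) * (1 - q) = 1 by field.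
  have e2 : p / (p + q - p * q) + q / (p + q - p * q) * (1 - p) = 1 by field.
  by rewrite (key _ _ e1 e2 J hJ); apply: congr1; field.
Qed.
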